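(* Let $D,Q$ be distributions over $[N]$ with $N$ divisible by $6$, let $\varepsilon\in(0,1)$, and define $D'=\frac12D+\frac12U_{[N]}$, $Q'=\frac12Q+\frac12U_{[N]}$, $m=6N$, and $\theta_x=\frac{\lfloor mQ'(x)\rfloor/m}{Q'(x)}$ for $x\in[N]$. Define distributions $D'',Q''$ over $[N+1]$ by $D''(x)=\theta_xD'(x)$, $Q''(x)=\theta_xQ'(x)$ for $x\in[N]$, and $D''(N+1)=1-\sum_{x\in[N]}\theta_xD'(x)$, $Q''(N+1)=1-\sum_{x\in[N]}\theta_xQ'(x)$. Then: $\theta_x\ge 2/3$ for all $x\in[N]$; $Q''$ is $\frac1m$-granular (every probability is an integer multiple of $1/m$) and has full support on $[N]$; $\delta_{TV}(D',Q')=\frac12\delta_{TV}(D,Q)$; if $D=Q$ then $D''=Q''$; and if $\delta_{TV}(D,Q)>\varepsilon$ then $\delta_{TV}(D'',Q'')\ge\varepsilon/3$.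
   Context: $U_{[N]}$ is the uniform distribution over $[N]$; $\delta_{TV}(P,Q)=\frac12\sum_{x}|P(x)-Q(x)|$ denotes total variation distance. *)

(* Defs.v *)
From HB Require Import structures.
From mathcomp Require Import all_boot all_order all_algebra.
Set Implicit Arguments. Unset Strict Implicit. Unset Printing Implicit Defensive.
Import Order.TTheory GRing.Theory Num.Theory.
Local Open Scope ring_scope.

(* Distributions over [n] = 'I_n (element x of [N] is the ordinal x-1). *)
Definition is_distr (R : numDomainType) (n : nat) (P : 'I_n -> R) : Prop :=
  (forall i, 0 <= P i) /\ \sum_(i < n) P i = 1.

Definition dTV (R : numFieldType) (n : nat) (P Q : 'I_n -> R) : R :=
  2^-1 * \sum_(i < n) `|P i - Q i|.

Definition unif (R : numFieldType) (n : nat) : 'I_n -> R := fun _ => (n%:R)^-1.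

Definition mixU (R : numFieldType) (n : nat) (P : 'I_n -> R) : 'I_n -> R :=
  fun x => 2^-1 * P x + 2^-1 * @unif R n x.

Definition mN (N : nat) : nat := 6 * N.

Definition theta (R : archiRealFieldType) (N : nat) (Q : 'I_N -> R) (x : 'I_N) : R :=
  (((Num.floor ((mN N)%:R * mixU Q x))%:~R / (mN N)%:R) / mixU Q x).

(* D'' over [N+1] = 'I_N.+1; x in [N] is [lift ord_max x], and N+1 is [ord_max].
   [P] is the distribution being transformed (D or Q), [Q] determines theta. *)
Definition transf (R : archiRealFieldType) (N : nat) (Q P : 'I_N -> R) : 'I_N.+1 -> R :=
  fun i => match unlift ord_max i with
           | Some x => theta Q x * mixU P x
           | None => 1 - \sum_(x < N) theta Q x * mixU P x
           end.

Definition granular (R : numFieldType) (n m : nat) (P : 'I_n -> R) : Prop :=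
  forall i, exists k : int, P i = k%:~R / m%:R.

(* Main.v *)
Require Import Defs.
From HB Require Import structures.
From mathcomp Require Import all_boot all_order all_algebra.
From mathcomp Require Import ring lra.
Import Order.TTheory GRing.Theory Num.Theory.
Local Open Scope ring_scope.

Section Aux.
Variable R : archiRealFieldType.

Lemma transf_lift N (Q P : 'I_N -> R) x :
  transf Q P (lift ord_max x) = theta Q x * mixU P x.
Proof. by rewrite /transf liftK. Qed.

Lemma transf_max N (Q P : 'I_N -> R) :
  transf Q P ord_max = 1 - \sum_(x < N) theta Q x * mixU P x.
Proof. by rewrite /transf unlift_none. Qed.

Lemma sum_split N (F : 'I_N.+1 -> R) :
  \sum_(i < N.+1) F i = \sum_(i < N) F (lift ord_max i) + F ord_max.
Proof.
rewrite big_ord_recr; congr (_ + _); apply: eq_bigr => i _; congr F.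
by apply: val_inj; rewrite /= /bump leqNgt ltn_ord.
Qed.

Lemma mix_diff N (D Q : 'I_N -> R) i :
  mixU D i - mixU Q i = 2^-1 * (D i - Q i).
Proof. rewrite /mixU; ring. Qed.
End Aux.

Theorem mainTheorem5 (R : archiRealFieldType) (N : nat) (D Q : 'I_N -> R) (eps : R) :
  (6 %| N)%N -> is_distr D -> is_distr Q -> 0 < eps < 1 ->
  [/\ (forall x : 'I_N, 2 / 3 <= theta Q x),
      granular (mN N) (transf Q Q)
        /\ (forall x : 'I_N, 0 < transf Q Q (lift ord_max x)),
      dTV (mixU D) (mixU Q) = 2^-1 * dTV D Q,
      (D = Q -> transf Q D = transf Q Q)
    & (dTV D Q > eps -> dTV (transf Q D) (transf Q Q) >= eps / 3)].
Proof.
move=> _ [D0 D1] [Q0 Q1] /andP[e0 e1].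
have Npos : (0 < N)%N.
  case: N D Q D0 D1 Q0 Q1 => // D Q _ _ _; rewrite big_ord0 => /eqP.
  by rewrite eq_sym oner_eq0.
have N0 : (N%:R : R) != 0 by rewrite pnatr_eq0 -lt0n.
have m0 : ((mN N)%:R : R) != 0 by rewrite pnatr_eq0 /mN muln_eq0 negb_or /= -lt0n.
have yE : forall x, (mN N)%:R * mixU Q x = 3 * (N%:R * Q x) + 3.
  move=> x; rewrite /mixU /unif /mN natrM; field.
  by rewrite N0.
have y3 : forall x, 3 <= (mN N)%:R * mixU Q x.
  move=> x; rewrite yE; have := Q0 x; have : (0 : R) <= N%:R by rewrite ler0n.
  by move=> h1 h2; have := mulr_ge0 h1 h2; lra.
have Qp : forall x, 0 < mixU Q x.
  move=> x; have := y3 x; have : (0 : R) < (mN N)%:R by rewrite lt0r m0 ler0n.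
  move=> mp h; rewrite -(pmulr_rgt0 _ mp); lra.
have thE : forall x, theta Q x =
    (Num.floor ((mN N)%:R * mixU Q x))%:~R / ((mN N)%:R * mixU Q x).
  by move=> x; rewrite /theta invfM mulrA.
have th23 : forall x, 2 / 3 <= theta Q x.
  move=> x; rewrite thE; have := y3 x; have := floorD1_gt ((mN N)%:R * mixU Q x).
  set y := _ * _; rewrite intrD => h1 h2.
  rewrite ler_pdivlMr; last by lra.
  lra.
have tQE : forall x, transf Q Q (lift ord_max x) =
    (Num.floor ((mN N)%:R * mixU Q x))%:~R / (mN N)%:R.
  by move=> x; rewrite transf_lift /theta divfK // gt_eqF // Qp.
have S1 : \sum_(i < N) `|mixU D i - mixU Q i| = 2^-1 * \sum_(i < N) `|D i - Q i|.
  rewrite mulr_sumr; apply: eq_bigr => i _.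
  by rewrite mix_diff normrM ger0_norm // invr_ge0 ler0n.
split => //.
- split.
  + move=> i; case: (unliftP ord_max i) => [x ->|->].
      by exists (Num.floor ((mN N)%:R * mixU Q x)); rewrite tQE.
    exists ((mN N)%:Z - \sum_(x < N) Num.floor ((mN N)%:R * mixU Q x)).
    rewrite transf_max rmorphB /= rmorph_sum /= mulrBl divff // mulr_suml.
    congr (_ - _); apply: eq_bigr => x _; by rewrite -tQE transf_lift.
  + move=> x; rewrite tQE divr_gt0 //; last by rewrite ltr0n lt0n -(pnatr_eq0 R).
    rewrite ltr0z floor_gt0; have := y3 x; lra.
- by rewrite /dTV S1.
- by move=> ->.
- move=> hd.
  have S2 : \sum_(i < N) theta Q i * `|mixU D i - mixU Q i| <=
      \sum_(i < N.+1) `|transf Q D i - transf Q Q i|.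
    rewrite sum_split -[X in X <= _]addr0; apply: lerD => //.
    rewrite le_eqVlt; apply/orP; left; apply/eqP; apply: eq_bigr => i _.
    rewrite !transf_lift -mulrBr normrM (ger0_norm (x := theta Q i)) //.
    by have := th23 i; lra.
  have S3 : \sum_(i < N) (2/3) * `|mixU D i - mixU Q i| <=
      \sum_(i < N) theta Q i * `|mixU D i - mixU Q i|.
    by apply: ler_sum => i _; apply: ler_wpM2r.
  move: S3 S2 hd; rewrite -mulr_sumr S1 /dTV.
  set A := \sum_(i < N) _; set B := \sum_(i < N) _; set C := \sum_(i < N.+1) _.
  lra.
Qed.
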